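(* Let $\mathcal H_{PT}$ and $\mathcal H_{CK}$ be the Hopf algebras described below and define $\mathrm{sk}$ on reduced plane trees by $\mathrm{sk}(|)=\emptyset$ for the single-leaf tree $|$ and, if the root of $t$ has children subtrees $t_1,\dots,t_n$ ($n\ge2$), $\mathrm{sk}(t)=B^+_{n-1}\big(\mathrm{sk}(t_1)\cdots\mathrm{sk}(t_n)\big)$. Then the algebra morphism $\mathrm{sk}:\mathcal H_{PT}\to\mathcal H_{CK}$ extending this map is a morphism of Hopf algebras.
   Context: A reduced plane tree is a rooted plane tree in which every internal vertex has at least two children. For a tree $t_0$ with $n$ leaves, $t_0\circ(t_1,\dots,t_n)$ is obtained by replacing the leaves of $t_0$, from left to right, by the trees $t_1,\dots,t_n$. $\mathcal H_{PT}$ is the free unital associative algebra over $\mathbb C$ generated by the reduced plane trees with at least two leaves, the single-leaf tree $|$ being identified with the unit (so a basis is given by plane forests, i.e. words of such trees), with coproduct defined on trees by $$\Delta(t)=\sum_{t=t_0\circ(t_1,\dots,t_n)} t_0\otimes (t_1\cdot t_2\cdots t_n),$$ the sum over all ways to write $t$ as such a composition ($t_0$ with $n$ leaves, $t_i$ arbitrary reduced plane trees including $|$), and extended as an algebra morphism. $\mathcal H_{CK}$ is the commutative polynomial algebra over $\mathbb C$ on the set of (non-plane) rooted trees whose vertices are decorated by positive integers; its monomials are forests and its unit is the empty forest $\emptyset$. For $n\ge1$ and a forest $F$, $B_n^+(F)$ is the rooted tree with a new root decorated by $n$ joined to the roots of the trees of $F$ ($B_n^+(\emptyset)$ is a single vertex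 decorated $n$). The coproduct of $\mathcal H_{CK}$ is the algebra morphism defined by $\Delta(\emptyset)=\emptyset\otimes\emptyset$ and $\Delta(B_n^+(F))=\emptyset\otimes B_n^+(F)+(B_n^+\otimes\mathrm{Id})\circ\Delta(F)$. *)

(* Defs.v *)
From mathcomp Require Import all_boot.
Set Implicit Arguments. Unset Strict Implicit. Unset Printing Implicit Defensive.

Inductive ptree := PLeaf | PNode of seq ptree.

Definition is_leaf (t : ptree) : bool := if t is PLeaf then true else false.

Fixpoint reduced (t : ptree) : bool :=
  match t with
  | PLeaf => true
  | PNode ts => (1 < size ts) && all reduced ts
  end.

(* basis generators of H_PT: reduced plane trees with at least two leaves *)
Definition pt_gen (t : ptree) : bool := reduced t && ~~ is_leaf t.

(* A basis element of H_PT is a plane forest = word (seq) of generators;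
   the empty word is the unit. *)

Definition choices (A : Type) (ls : seq (seq A)) : seq (seq A) :=
  foldr (fun l acc => [seq x :: r | x <- l, r <- acc]) [:: [::]] ls.

(* all ways of writing t = t0 o (t1,...,tn): pairs (t0, [:: t1; ...; tn]) *)
Fixpoint decs (t : ptree) : seq (ptree * seq ptree) :=
  match t with
  | PLeaf => [:: (PLeaf, [:: PLeaf])]
  | PNode ts =>
      (PLeaf, [:: t]) ::
      [seq (PNode (map fst ch), flatten (map snd ch)) | ch <- choices (map decs ts)]
  end.

(* the tree t viewed as an element of the free algebra: | is the unit *)
Definition pt_word_of (t : ptree) : seq ptree := if is_leaf t then [::] else [:: t].

(* product of coproducts: expansion of a product of elements of H (x) H *)
Definition tens_prod (B : Type) (ls : seq (seq (seq B * seq B))) : seq (seq B * seq B) :=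
  foldr (fun l acc => [seq (a.1 ++ b.1, a.2 ++ b.2) | a <- l, b <- acc])
        [:: ([::], [::])] ls.

(* Delta(t) = sum t0 (x) t1 ... tn, as a list of basis tensors (coefficients 1) *)
Definition pt_cop_tree (t : ptree) : seq (seq ptree * seq ptree) :=
  [seq (pt_word_of d.1, flatten (map pt_word_of d.2)) | d <- decs t].

Definition pt_cop (w : seq ptree) : seq (seq ptree * seq ptree) :=
  tens_prod (map pt_cop_tree w).

Definition pt_counit (w : seq ptree) : nat := if nilp w then 1 else 0.

(* RNode n F = B_n^+(F).  Non-plane: trees/forests are compared up to
   isomorphism (permutation of children / of the trees of a forest). *)
Inductive rtree := RNode of nat & seq rtree.

Fixpoint tiso (s t : rtree) {struct s} : bool :=
  match s, t with
  | RNode a cs, RNode b ds =>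
      (a == b) &&
      (fix fiso (cs ds : seq rtree) {struct cs} : bool :=
         match cs with
         | [::] => nilp ds
         | c :: cs' =>
             (fix pick (pre ds : seq rtree) {struct ds} : bool :=
                match ds with
                | [::] => false
                | d :: ds' => (tiso c d && fiso cs' (pre ++ ds')) || pick (rcons pre d) ds'
                end) [::] ds
         end) cs ds
  end.

Definition forest_iso (F G : seq rtree) : bool := tiso (RNode 0 F) (RNode 0 G).

(* Delta(B_n^+(F)) = empty (x) B_n^+(F) + (B_n^+ (x) Id) Delta(F) *)
Fixpoint ck_cop_tree (t : rtree) : seq (seq rtree * seq rtree) :=
  match t with
  | RNode n F =>
      ([::], [:: t]) ::
      [seq ([:: RNode n p.1], p.2) | p <- tens_prod (map ck_cop_tree F)]
  end.

Definition ck_cop (F : seq rtree) : seq (seq rtree * seq rtree) :=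
  tens_prod (map ck_cop_tree F).

Definition ck_counit (F : seq rtree) : nat := if nilp F then 1 else 0.

(* coefficient of the basis tensor F (x) G (F, G forests up to isomorphism)
   in a sum of basis tensors *)
Definition coef (L : seq (seq rtree * seq rtree)) (F G : seq rtree) : nat :=
  count (fun p => forest_iso p.1 F && forest_iso p.2 G) L.

Fixpoint sk (t : ptree) : seq rtree :=
  match t with
  | PLeaf => [::]
  | PNode ts => [:: RNode (size ts).-1 (flatten (map sk ts))]
  end.

Definition skf (w : seq ptree) : seq rtree := flatten (map sk w).

Definition sk2 (L : seq (seq ptree * seq ptree)) : seq (seq rtree * seq rtree) :=
  [seq (skf p.1, skf p.2) | p <- L].

(* Main.v *)
Require Import Defs.
From mathcomp Require Import all_boot.

Definition mul {B : Type} (L M : seq (seq B * seq B)) : seq (seq B * seq B) :=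
  [seq (a.1 ++ b.1, a.2 ++ b.2) | a <- L, b <- M].
Definition unit0 {B : Type} : seq (seq B * seq B) := [:: ([::], [::])].

Lemma tens_prodE B (ls : seq (seq (seq B * seq B))) : tens_prod ls = foldr mul unit0 ls.
Proof. by []. Qed.

Lemma mul_cons B (x : seq B * seq B) L M :
  mul (x :: L) M = map (fun b => (x.1 ++ b.1, x.2 ++ b.2)) M ++ mul L M.
Proof. by []. Qed.

Lemma mul_cat B (A C M : seq (seq B * seq B)) : mul (A ++ C) M = mul A M ++ mul C M.
Proof. by elim: A => //= x A IH; rewrite !mul_cons IH catA. Qed.

Lemma mul_map B (x : seq B * seq B) M N :
  mul (map (fun b => (x.1 ++ b.1, x.2 ++ b.2)) M) N
  = map (fun b => (x.1 ++ b.1, x.2 ++ b.2)) (mul M N).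
Proof.
elim: M => //= y M IH; rewrite !mul_cons IH map_cat -map_comp /=; congr (_ ++ _).
by apply: eq_map => b /=; rewrite !catA.
Qed.

Lemma mulA B (L M N : seq (seq B * seq B)) : mul (mul L M) N = mul L (mul M N).
Proof. by elim: L => //= x L IH; rewrite !mul_cons mul_cat IH mul_map. Qed.

Lemma mul1l B (M : seq (seq B * seq B)) : mul unit0 M = M.
Proof. by rewrite /mul /= cats0; elim: M => //= -[a b] M ->. Qed.

Lemma mul1r B (M : seq (seq B * seq B)) : mul M unit0 = M.
Proof. by elim: M => //= -[a b] M IH; rewrite mul_cons IH /= !cats0. Qed.

Lemma tens_prod_cat B (l1 l2 : seq (seq (seq B * seq B))) :
  tens_prod (l1 ++ l2) = mul (tens_prod l1) (tens_prod l2).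
Proof.
elim: l1 => [|l l1 IH]; first by rewrite /= mul1l.
by rewrite cat_cons !tens_prodE /= -!tens_prodE IH -mulA.
Qed.

Lemma tens_prod_flatten B (LL : seq (seq (seq (seq B * seq B)))) :
  tens_prod (flatten LL) = foldr mul unit0 (map (@tens_prod B) LL).
Proof. by elim: LL => //= l LL IH; rewrite tens_prod_cat IH. Qed.

Section Hom.
Variables (B C : Type) (h : seq B -> seq C).
Hypothesis h0 : h [::] = [::].
Hypothesis hD : forall a b, h (a ++ b) = h a ++ h b.
Let hh (p : seq B * seq B) := (h p.1, h p.2).

Lemma map_mul L M : map hh (mul L M) = mul (map hh L) (map hh M).
Proof.
elim: L => //= x L IH; rewrite !mul_cons map_cat IH -!map_comp; congr (_ ++ _).
by apply: eq_map => b; rewrite /hh /= !hD.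
Qed.

Lemma map_tens_prod ls : map hh (tens_prod ls) = tens_prod (map (map hh) ls).
Proof.
elim: ls => [|l ls IH]; first by rewrite /= /hh h0.
by rewrite !tens_prodE /= -!tens_prodE map_mul IH.
Qed.
End Hom.

Lemma skf_cat a b : skf (a ++ b) = skf a ++ skf b.
Proof. by rewrite /skf map_cat flatten_cat. Qed.

Lemma skf_pw l : skf (flatten (map pt_word_of l)) = skf l.
Proof. by elim: l => //= x l IH; rewrite skf_cat IH; case: x. Qed.

Definition fd (d : ptree * seq ptree) := (sk d.1, skf d.2).

Lemma choicesE (ls : seq (seq (ptree * seq ptree))) :
  map (fun ch => (size ch, flatten (map (fun d => sk d.1) ch), skf (flatten (map snd ch))))
      (choices ls)
  = map (fun p => (size ls, p.1, p.2)) (tens_prod (map (map fd) ls)).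
Proof.
elim: ls => [|l ls IH] //=.
idtac.
elim: l => [|x l IHl] //=.
rewrite !map_cat IHl; congr (_ ++ _).
rewrite -map_comp -[in RHS]map_comp.
transitivity (map (fun q : nat * seq rtree * seq rtree => (q.1.1.+1, sk x.1 ++ q.1.2, skf x.2 ++ q.2))
   (map (fun p => (size ls, p.1, p.2)) (tens_prod (map (map fd) ls)))).
  rewrite -IH -map_comp; apply: eq_map => r /=.
  by rewrite skf_cat.
by rewrite -map_comp; apply: eq_map.
Qed.

Fixpoint allP (P : ptree -> Prop) (ts : seq ptree) : Prop :=
  if ts is t :: ts' then P t /\ allP P ts' else True.

Definition ptree_ind' (P : ptree -> Prop) (HL : P PLeaf)
  (HN : forall ts, allP P ts -> P (PNode ts)) : forall t, P t :=
  fix F t := match t with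
  | PLeaf => HL
  | PNode ts => HN ts ((fix G ts := match ts return allP P ts with
                        | [::] => I
                        | t :: ts' => conj (F t) (G ts') end) ts)
  end.

Lemma flat_sk ts (IH : allP (fun t => map fd (decs t) = tens_prod (map ck_cop_tree (sk t))) ts) :
  tens_prod (map (map fd) (map decs ts)) = tens_prod (map ck_cop_tree (flatten (map sk ts))).
Proof.
rewrite map_flatten tens_prod_flatten.
elim: ts IH => //= t ts IHt [-> /IHt].
by rewrite !tens_prodE /= => ->.
Qed.

Lemma tree_main t : map fd (decs t) = tens_prod (map ck_cop_tree (sk t)).
Proof.
elim/ptree_ind': t => [|ts IH] //=.
rewrite tens_prodE /= -tens_prodE.
have E (L : seq (seq rtree * seq rtree)) : flatten [seq [:: (a.1 ++ [::], a.2 ++ [::])] | a <- L] = L.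
  by elim: L => //= -[a b] L ->; rewrite !cats0.
rewrite E /fd /=; congr (_ :: _). 
rewrite -flat_sk // -map_comp.
have := congr1 (map (fun q : nat * seq rtree * seq rtree => ([:: RNode q.1.1.-1 q.1.2], q.2)))
         (choicesE (map decs ts)).
rewrite -!map_comp size_map => <-.
by apply: eq_map => ch /=; rewrite /skf size_map -map_comp.
Qed.

Lemma sk2_tree t : sk2 (pt_cop_tree t) = tens_prod (map ck_cop_tree (sk t)).
Proof.
rewrite -tree_main /sk2 /pt_cop_tree -map_comp; apply: eq_map => d /=.
by rewrite skf_pw /fd; case: d => [[] l].
Qed.

Lemma sk2_eq w : sk2 (pt_cop w) = ck_cop (skf w).
Proof.
rewrite /sk2 /pt_cop (@map_tens_prod _ _ skf) //; last exact: skf_cat.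
rewrite /ck_cop /skf map_flatten tens_prod_flatten -map_comp.
elim: w => //= t w IH; rewrite !tens_prodE /= -!tens_prodE IH.
by rewrite -[map _ (pt_cop_tree t)]/(sk2 _) sk2_tree.
Qed.

Theorem mainTheorem8 (w : seq ptree) :
  all pt_gen w ->
  (forall F G : seq rtree, coef (sk2 (pt_cop w)) F G = coef (ck_cop (skf w)) F G)
  /\ ck_counit (skf w) = pt_counit w.
Proof.
move=> Hw; split; first by move=> F G; rewrite sk2_eq.
case: w Hw => [|t w] //= /andP [Ht _].
by case: t Ht.
Qed.
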